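(* Let $G$ be a path-pairable graph on $n$ vertices with diameter $d \geq 20$. Then $d \leq 6\sqrt{2}\cdot\sqrt{n}$.
   Context: A graph $G$ on $n=2m$ vertices is path-pairable if for every partition of its vertex set into $m$ pairs $\{x_1,y_1\},\dots,\{x_m,y_m\}$ there exist pairwise edge-disjoint paths $P_1,\dots,P_m$ such that $P_i$ joins $x_i$ to $y_i$ for each $i$. The diameter of $G$ is the maximum distance between two vertices of $G$. *)

(* Defs.v *)
From mathcomp Require Import all_boot all_order all_algebra.
Set Implicit Arguments. Unset Strict Implicit. Unset Printing Implicit Defensive.

Definition simple_graph (T : finType) (e : rel T) : Prop :=
  symmetric e /\ irreflexive e.

Definition walk_of_length (T : finType) (e : rel T) (x y : T) (k : nat) : Prop :=
  exists s : seq T, [/\ path e x s, last x s = y & size s = k].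

Definition dist_le (T : finType) (e : rel T) (x y : T) (k : nat) : Prop :=
  exists2 j, j <= k & walk_of_length e x y j.

Definition is_diameter (T : finType) (e : rel T) (d : nat) : Prop :=
  (forall x y : T, dist_le e x y d) /\
  (exists x y : T, forall k, walk_of_length e x y k -> d <= k).

Definition path_edges (T : finType) (x : T) (s : seq T) : seq {set T} :=
  pairmap (fun a b => [set a; b]) x s.

(* A partition of the vertex set into pairs, encoded as a fixed-point-free
   involution p (the pairs are {x, p x}). *)
Definition pairing (T : finType) (p : T -> T) : Prop :=
  forall x, p (p x) = x /\ p x != x.

(* Path-pairable: n = #|T| is even, and for every pairing there are paths
   P x from x to p x (one for each of the two endpoints of a pair; it suffices
   that they exist), such that paths belonging to different pairs are
   edge-disjoint. *)
Definition path_pairable (T : finType) (e : rel T) : Prop :=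
  ~~ odd #|T| /\
  forall p : T -> T, pairing p ->
    exists P : T -> seq T,
      (forall x, [/\ path e x (P x), last x (P x) = p x & uniq (x :: P x)]) /\
      (forall x y, y != x -> y != p x ->
         ~~ has (fun E => E \in path_edges x (P x)) (path_edges y (P y))).

(* Main.v *)
Require Import Defs.
From mathcomp Require Import all_boot all_order all_algebra zify.

Lemma grow (n d : nat) (S a : nat -> nat) :
  (1 <= S 0)%N ->
  (forall i, i < d -> S i.+1 = S i + a i.+1)%N ->
  (forall i, i < d -> 2 * S i <= n -> S i <= a i * a i.+1)%N ->
  forall k, (2 * k <= d -> 2 * S (2 * k) <= n -> k * k < S (2 * k))%N.
Proof.
move=> S0 rec cut; elim=> [|k IH] hk hS; first by rewrite muln0.
have e1 := rec (2 * k) ltac:(lia).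
have e2 := rec (2 * k).+1 ltac:(lia).
have E : (2 * k.+1 = (2 * k).+1.+1)%N by lia.
rewrite E in hS *.
have ih := IH ltac:(lia) ltac:(lia).
have c := cut (2 * k).+1 ltac:(lia).
have c2 := c ltac:(lia).
clear c; move: e1 e2 ih c2 hS; set s0 := S (2*k); set s1 := S _; set s2 := S _.
set a1 := a _; set a2 := a _ => e1 e2 ih c hS.
rewrite e2 e1.
have h4 : (4 * (a1 * a2) <= (a1 + a2) * (a1 + a2))%N by have := nat_AGM2 a1 a2; rewrite expnS expn1 => -[].
nia.
Qed.

Lemma exists_pairing {T : finType} (S : {set T}) :
  ~~ odd #|T| -> (2 * #|S| <= #|T|)%N ->
  exists p : T -> T, pairing p /\ forall x, x \in S -> p x \notin S.
Proof.
move=> ev hS.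
set sA := enum S; set sB := enum (~: S).
have szA : size sA = #|S| by rewrite -cardE.
have szB : size sB = (#|T| - #|S|)%N by rewrite -cardE cardsCs setCK.
have uA : uniq sA by exact: enum_uniq.
have uB : uniq sB by exact: enum_uniq.
have mA x : (x \in sA) = (x \in S) by rewrite mem_enum.
have mB x : (x \in sB) = (x \notin S) by rewrite mem_enum inE.
have evT : (#|T| %% 2 = 0)%N by rewrite modn2; case: odd ev.

pose f k := if (k - #|S|) %% 2 == 1 then k.-1 else k.+1.
pose p x := if x \in S then nth x sB (index x sA)
            else if index x sB < #|S| then nth x sA (index x sB)
            else nth x sB (f (index x sB)).
exists p; split; last first.
  move=> x xS; rewrite /p xS -mB mem_nth // szB.
  have : (index x sA < #|S|)%N by rewrite -szA index_mem mA.
  lia.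
move=> x; rewrite /p.
case: (boolP (x \in S)) => xS.
  have ia : (index x sA < #|S|)%N by rewrite -szA index_mem mA.
  have ib : (index x sA < size sB)%N by rewrite szB; lia.
  have yB := mem_nth x ib; rewrite mB in yB.
  rewrite (negbTE yB) index_uniq // ia nth_index ?mA //.
  split=> //; apply/negP => /eqP h; move: yB; rewrite h xS.
  by [].
have ib : (index x sB < size sB)%N by rewrite index_mem mB.
case ka: (index x sB < #|S|).
  have ya : (index x sB < size sA)%N by rewrite szA.
  have yA := mem_nth x ya; rewrite mA in yA.
  rewrite yA index_uniq // nth_index ?mB //; split=> //.
  by apply/negP => /eqP h; move: yA; rewrite h (negbTE xS).
set k := index x sB in ib ka *.
have fk : (f k < size sB)%N by rewrite /f szB in ib *; case: ifP; lia.
have fk2 : (#|S| <= f k)%N by rewrite /f; case: ifP; lia.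
have yB := mem_nth x fk; rewrite mB in yB.
rewrite (negbTE yB) index_uniq // ltnNge fk2 /=.
have ffk : f (f k) = k.
  rewrite /f; case h1: ((k - #|S|) %% 2 == 1).
    by case h2: ((k.-1 - #|S|) %% 2 == 1); lia.
  by case h2: ((k.+1 - #|S|) %% 2 == 1); lia.
rewrite ffk nth_index ?mB //; split=> //.
apply/negP => /eqP h.
have := congr1 (fun y => index y sB) h; rewrite index_uniq //.
rewrite /f; case: ifP; lia.
Qed.
Lemma crossing (T : finType) (e : rel T) (S : {set T}) x s :
  path e x s -> x \in S -> last x s \notin S ->
  exists u w, [/\ e u w, u \in S, w \notin S & [set u; w] \in path_edges x s].
Proof.
elim: s x => [|y s IH] x /=; first by move=> _ ->.
move=> /andP[exy ps] xS ls.
case: (boolP (y \in S)) => yS.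
  have [u [w [h1 h2 h3 h4]]] := IH y ps yS ls.
  by exists u, w; split=> //; rewrite /path_edges /= inE h4 orbT.
by exists x, y; split=> //; rewrite /path_edges /= inE eqxx.
Qed.

Lemma cut_bound (T : finType) (e : rel T) : path_pairable e ->
  forall S : {set T}, (2 * #|S| <= #|T|)%N ->
  (#|S| <= #|[set u : T * T | e u.1 u.2 && (u.1 \in S) && (u.2 \notin S)]|)%N.
Proof.
move=> [ev pp] S hS.
have [p [pp' pS]] := exists_pairing S ev hS.
have [P [HP Hdis]] := pp p pp'.
set X := [set u : T * T | _].
pose cutE := [set [set u.1; u.2] | u in X].
pose c x := odflt set0 [pick E in cutE | E \in path_edges x (P x)].
have cP x : x \in S -> c x \in cutE /\ c x \in path_edges x (P x).
  move=> xS; rewrite /c; case: pickP => [E /andP[]//|none].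
  have [pa la _] := HP x.
  have lS : last x (P x) \notin S by rewrite la; exact: pS.
  have [u [w [h1 h2 h3 h4]]] := @crossing _ _ S _ _ pa xS lS.
  have := none [set u; w]; rewrite h4 andbT.
  suff -> : [set u; w] \in cutE by [].
  by apply/imsetP; exists (u, w) => //; rewrite inE /= h1 h2 h3.
have cinj : {in S &, injective c}.
  move=> x y xS yS cxy; apply/eqP; apply/negPn/negP => nxy.
  have ypx : y != p x.
    by apply/negP => /eqP h; move: (pS x xS); rewrite -h yS.
  have := Hdis x y; rewrite eq_sym nxy ypx => /(_ isT isT) /hasP; apply.
  by exists (c y); [exact: (cP y yS).2 | rewrite -cxy; exact: (cP x xS).2].
rewrite -(card_in_imset cinj).
apply: leq_trans (leq_imset_card _ X).
apply: subset_leq_card; apply/subsetP => E /imsetP[x xS ->].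
exact: (cP x xS).1.
Qed.
Lemma nat_main (T : finType) (e : rel T) (d : nat) :
  simple_graph e -> path_pairable e -> is_diameter e d -> (20 <= d)%N ->
  (d * d <= 72 * #|T|)%N.
Proof.
move=> [sym irr] pp [dall [x0 [y0 far]]] d20.
pose W k v := [exists t : k.-tuple T, path e x0 t && (last x0 t == v)].
have walkW k v : walk_of_length e x0 v k -> W k v.
  case=> s [ps ls ss]; apply/existsP.
  have sz : size s == k by rewrite ss.
  by exists (Tuple sz); rewrite /= ps ls eqxx.
have Wwalk k v : W k v -> walk_of_length e x0 v k.
  case/existsP=> t /andP[pt /eqP lt]; exists (tval t); split=> //.
  exact: size_tuple.
have hex v : exists k, W k v.
  by have [j _ wj] := dall x0 v; exists j; exact: walkW.
pose D v := ex_minn (hex v).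
have DW v : W (D v) v by rewrite /D; case: ex_minnP.
have Dmin v k : W k v -> (D v <= k)%N by rewrite /D; case: ex_minnP => m _ H /H.
have Dle v : (D v <= d)%N by have [j jd wj] := dall x0 v; exact: leq_trans (Dmin _ _ (walkW _ _ wj)) jd.
have D0 : D x0 = 0%N.
  apply/eqP; rewrite -leqn0; apply: Dmin; apply/existsP.
  by exists [tuple]; rewrite /= eqxx.
have Dedge u w : e u w -> (D w <= (D u).+1)%N.
  move=> euw; apply: Dmin; case/existsP: (DW u) => t /andP[pt /eqP lt].
  apply/existsP.
  have sz : size (rcons t w) == (D u).+1 by rewrite size_rcons size_tuple.
  exists (Tuple sz); rewrite /= rcons_path pt lt euw last_rcons eqxx.
  by [].
have Dy0 : D y0 = d.
  apply/eqP; rewrite eqn_leq Dle /=; apply: far; exact: Wwalk.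
have Dsym u w : e u w -> (D u <= (D w).+1)%N by rewrite sym => /Dedge.
pose L i := [set v | D v == i].
pose Pre i := [set v | (D v <= i)%N].
pose Suf i := [set v | (d - i <= D v)%N].
have recP i : (i < d)%N -> #|Pre i.+1| = (#|Pre i| + #|L i.+1|)%N.
  move=> _; rewrite -(cardsID (Pre i) (Pre i.+1)).
  have -> : Pre i.+1 :&: Pre i = Pre i.
    by apply/setP=> v; rewrite !inE; apply/andP/idP => [[]//|h]; split=> //; lia.
  have -> : Pre i.+1 :\: Pre i = L i.+1.
    apply/setP=> v; rewrite !inE.
    by apply/andP/eqP => [[/negP h1 h2]|h]; [lia | split; [apply/negP|]; lia].
  by [].
have cutP i : (i < d)%N -> (2 * #|Pre i| <= #|T|)%N -> (#|Pre i| <= #|L i| * #|L i.+1|)%N.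
  move=> id h; apply: leq_trans (@cut_bound _ _ pp _ h) _; rewrite -cardsX.
  apply: subset_leq_card; apply/subsetP=> -[u w]; rewrite !inE /=.
  move=> /andP[/andP[euw hu] hw]; have := Dedge u w euw.
  by move=> h2; apply/andP; split; apply/eqP; lia.
have recS i : (i < d)%N -> #|Suf i.+1| = (#|Suf i| + #|L (d - i.+1)|)%N.
  move=> id; rewrite -(cardsID (Suf i) (Suf i.+1)).
  have -> : Suf i.+1 :&: Suf i = Suf i.
    by apply/setP=> v; rewrite !inE; apply/andP/idP => [[]//|h]; split=> //; lia.
  have -> : Suf i.+1 :\: Suf i = L (d - i.+1).
    apply/setP=> v; rewrite !inE.
    by apply/andP/eqP => [[/negP h1 h2]|h]; [lia | split; [apply/negP|]; lia].
  by [].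
have cutS i : (i < d)%N -> (2 * #|Suf i| <= #|T|)%N ->
    (#|Suf i| <= #|L (d - i)| * #|L (d - i.+1)|)%N.
  move=> id h; apply: leq_trans (@cut_bound _ _ pp _ h) _; rewrite -cardsX.
  apply: subset_leq_card; apply/subsetP=> -[u w]; rewrite !inE /=.
  move=> /andP[/andP[euw hu] hw]; have := Dsym u w euw.
  by move=> h2; apply/andP; split; apply/eqP; lia.
have b1 : (1 <= #|Pre 0|)%N by apply/card_gt0P; exists x0; rewrite inE D0.
have b2 : (1 <= #|Suf 0|)%N by apply/card_gt0P; exists y0; rewrite inE Dy0 subn0.
have g1 := @grow _ _ (fun i => #|Pre i|) (fun i => #|L i|) b1 recP cutP.
have g2 := @grow _ _ (fun i => #|Suf i|) (fun i => #|L (d - i)|) b2 recS cutS.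
set k := (d.-1 %/ 4)%N.
have hk : (4 * k < d)%N by rewrite /k; lia.
have disj : (#|Pre (2 * k)| + #|Suf (2 * k)| <= #|T|)%N.
  rewrite -cardsUI.
  have -> : Pre (2 * k) :&: Suf (2 * k) = set0.
    by apply/setP=> v; rewrite !inE; apply/negP => /andP[]; lia.
  by rewrite cards0 addn0 max_card.
have g1' := g1 k ltac:(lia); have g2' := g2 k ltac:(lia).
have big : (2 * (k * k) < #|T|)%N.
  case: (leqP (2 * #|Pre (2 * k)|) #|T|) => h1.
    case: (leqP (2 * #|Suf (2 * k)|) #|T|) => h2.
      by have := g1' h1; have := g2' h2; lia.
    by have := g1' h1; lia.
  have h2 : (2 * #|Suf (2 * k)| <= #|T|)%N by lia.
  by have := g2' h2; lia.
have d12 : (d <= 12 * k)%N by rewrite /k; lia.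
have : (d * d <= (12 * k) * (12 * k))%N by apply: leq_mul.
lia.
Qed.
Import Order.TTheory GRing.Theory Num.Theory.
Local Open Scope ring_scope.

Lemma fin_real (R : rcfType) (d n : nat) : (d * d <= 72 * n)%N ->
  (d%:R : R) <= 6 * Num.sqrt 2 * Num.sqrt (n%:R).
Proof.
move=> h.
have e6 : (6 : R) = Num.sqrt (6 ^+ 2) by rewrite sqrtr_sqr ger0_norm.
rewrite e6 -sqrtrM ?sqr_ge0 // -sqrtrM; last by apply: mulr_ge0; [exact: sqr_ge0|].
rewrite -[d%:R]ger0_norm // -sqrtr_sqr ler_sqrt; last first.
  by apply: mulr_ge0; [apply: mulr_ge0|]; rewrite ?sqr_ge0 ?ler0n.
have -> : (6 : R) ^+ 2 * 2 * n%:R = (72 * n)%N%:R by rewrite natrM; congr (_ * _); rewrite -natrX -natrM.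
by rewrite -natrX ler_nat expnS expn1.
Qed.

Theorem theorem1 (R : rcfType) (T : finType) (e : rel T) (d : nat) :
  simple_graph e -> path_pairable e -> is_diameter e d -> (20 <= d)%N ->
  (d%:R : R) <= 6 * Num.sqrt 2 * Num.sqrt (#|T|%:R).
Proof.
move=> h1 h2 h3 h4; apply: fin_real; exact: nat_main h1 h2 h3 h4.
Qed.
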